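(* Let $(V,F^\bullet,h)$ be a complex polarized Hodge structure of length $w\ge1$ with Hodge decomposition $V=\bigoplus_pV^p$ and Hodge metric $h_H$. For every $u\in\mathrm{End}(V)^{-1}=\bigoplus_k\mathrm{Hom}(V^k,V^{k-1})$, with $u^*$ its $h_H$-adjoint, \[|[u,u^*]|^2_{h_H}\ge\frac{4}{w^2\cdot\dim V}\,|u|^4_{h_H},\] i.e. $\operatorname{tr}([u,u^*]^2)\ge\frac{4}{w^2\dim V}(\operatorname{tr}(uu^* ))^2$.
   Context: A complex polarized Hodge structure (weight zero) on $V$: nondegenerate hermitian form $h$ and $h$-orthogonal decomposition $V=\bigoplus_{p\in\mathbb{Z}}V^p$ with $h|_{V^p}$ positive definite for $p$ even and negative definite for $p$ odd. Its length is $b-a$ for the smallest interval $[a,b]$ with $V^p=0$ for $p\notin[a,b]$. The Hodge metric $h_H$ is the positive definite hermitian metric with the $V^p$ mutually orthogonal and $h_H=(-1)^ph$ on $V^p$; on $\mathrm{End}(V)$ the induced metric is $|u|^2_{h_H}=\operatorname{tr}(uu^* )$. *)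

(* Defs.v *)
From HB Require Import structures.
From mathcomp Require Import all_boot all_order all_algebra.
From mathcomp Require Import complex.
From mathcomp Require Import reals.
Set Implicit Arguments. Unset Strict Implicit. Unset Printing Implicit Defensive.
Import Order.TTheory GRing.Theory Num.Theory.
Local Open Scope ring_scope.

(* V = C^n realized as row vectors 'rV[C]_n; subspaces of V are row spaces of
   n x n matrices (mxalgebra); an endomorphism u of V is a matrix U acting on
   the right: x |-> x *m U. *)

Definition ctr (C : numClosedFieldType) m n (A : 'M[C]_(m, n)) : 'M[C]_(n, m) :=
  map_mx Num.conj A^T.

Definition sform (C : numClosedFieldType) n (H : 'M[C]_n) (x y : 'rV[C]_n) : C :=
  (x *m H *m ctr y) 0 0.

Definition hermitian (C : numClosedFieldType) n (H : 'M[C]_n) : Prop :=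
  ctr H = H.

(* A complex polarized Hodge structure of weight zero on V = C^n, with hermitian
   form given by H and Hodge decomposition V = (+)_p Vp p, of length exactly w:
   [a, a + w] is the smallest interval outside of which Vp vanishes. *)
Definition is_CPHS (C : numClosedFieldType) n (H : 'M[C]_n) (Vp : int -> 'M[C]_n)
    (w : nat) : Prop :=
  [/\ hermitian H, H \in unitmx,
    exists a : int,
      [/\ (forall p : int, (p < a)%R \/ (a + w%:Z < p)%R -> Vp p = 0),
          Vp a != 0, Vp (a + w%:Z) != 0,
          (\sum_(i < w.+1) Vp (a + i%:Z)%R :=: 1%:M)%MS &
          mxdirect (\sum_(i < w.+1) <<Vp (a + i%:Z)%R>>)%MS],
    (forall p q : int, p != q -> forall x y : 'rV[C]_n,
        (x <= Vp p)%MS -> (y <= Vp q)%MS -> sform H x y = 0) &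
    (forall p : int, forall x : 'rV[C]_n, (x <= Vp p)%MS -> x != 0 ->
        0 < (-1) ^ p * sform H x x)].

Definition is_hodge_metric (C : numClosedFieldType) n (H : 'M[C]_n)
    (Vp : int -> 'M[C]_n) (G : 'M[C]_n) : Prop :=
  [/\ hermitian G,
    (forall x : 'rV[C]_n, x != 0 -> 0 < sform G x x),
    (forall p q : int, p != q -> forall x y : 'rV[C]_n,
        (x <= Vp p)%MS -> (y <= Vp q)%MS -> sform G x y = 0) &
    (forall p : int, forall x y : 'rV[C]_n, (x <= Vp p)%MS -> (y <= Vp p)%MS ->
        sform G x y = (-1) ^ p * sform H x y)].

Definition is_adjoint (C : numClosedFieldType) n (G U Us : 'M[C]_n) : Prop :=
  forall x y : 'rV[C]_n, sform G (x *m U) y = sform G x (y *m Us).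

Definition in_End_minus1 (C : numClosedFieldType) n (Vp : int -> 'M[C]_n)
    (U : 'M[C]_n) : Prop :=
  forall k : int, (Vp k *m U <= Vp (k - 1))%MS.

(* Main.v *)
Require Import Defs.
From HB Require Import structures.
From mathcomp Require Import all_boot all_order all_algebra.
From mathcomp Require Import complex.
From mathcomp Require Import reals.
From mathcomp Require Import ring.
Set Implicit Arguments. Unset Strict Implicit. Unset Printing Implicit Defensive.
Import Order.TTheory GRing.Theory Num.Theory.
Local Open Scope ring_scope.

Section Gen.
Variable C : numClosedFieldType.

Lemma ctrK m n (A : 'M[C]_(m,n)) : ctr (ctr A) = A.
Proof. by apply/matrixP=> i j; rewrite !mxE conjCK. Qed.

Lemma ctrM m n p (A : 'M[C]_(m,n)) (B : 'M[C]_(n,p)) : ctr (A *m B) = ctr B *m ctr A.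
Proof. by rewrite /ctr trmx_mul map_mxM. Qed.

Lemma ctrD m n (A B : 'M[C]_(m,n)) : ctr (A + B) = ctr A + ctr B.
Proof. by rewrite /ctr linearD map_mxD. Qed.

Lemma ctrB m n (A B : 'M[C]_(m,n)) : ctr (A - B) = ctr A - ctr B.
Proof. by rewrite /ctr linearB map_mxB. Qed.

Lemma ctrZ m n a (A : 'M[C]_(m,n)) : ctr (a *: A) = a^* *: ctr A.
Proof. by rewrite /ctr linearZ map_mxZ. Qed.

Lemma ctr1 n : ctr (1%:M : 'M[C]_n) = 1%:M.
Proof. by rewrite /ctr trmx1 map_mx1. Qed.

Lemma ctr_sum n I (r : seq I) (F : I -> 'M[C]_n) : ctr (\sum_(i <- r) F i) = \sum_(i <- r) ctr (F i).
Proof. by elim/big_rec2: _ => [|i a b _ <-]; rewrite ?ctrD // /ctr trmx0 map_mx0. Qed.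

Lemma tr_ctr n (A : 'M[C]_n) : \tr (ctr A) = (\tr A)^*.
Proof. by rewrite /mxtrace rmorph_sum; apply: eq_bigr => i _; rewrite !mxE. Qed.

Lemma tr_pos m n (A : 'M[C]_(m,n)) : 0 <= \tr (A *m ctr A).
Proof.
rewrite /mxtrace; apply: sumr_ge0 => i _; rewrite mxE; apply: sumr_ge0 => j _.
by rewrite !mxE mul_conjC_ge0.
Qed.

Lemma mx_eq_vec n (A B : 'M[C]_n) : (forall x : 'rV[C]_n, x *m A = x *m B) -> A = B.
Proof. by move=> h; apply/row_matrixP => i; rewrite !rowE h. Qed.

Lemma real_conj (z : C) : 0 <= z -> z^* = z.
Proof. by move=> h; apply: conj_Creal; apply: ger0_real. Qed.
End Gen.

Section Gen2.
Variable C : numClosedFieldType.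

Lemma rowcol_entry m n p (A : 'M[C]_(m,n)) (B : 'M[C]_(n,p)) i j :
  (row i A *m col j B) 0 0 = (A *m B) i j.
Proof. by rewrite !mxE; apply: eq_bigr => k _; rewrite !mxE. Qed.

Lemma factor_pd n (G : 'M[C]_n) : ctr G = G ->
  (forall x : 'rV_n, x != 0 -> 0 < sform G x x) ->
  exists S Si : 'M[C]_n, [/\ S *m Si = 1%:M, Si *m S = 1%:M & G = S *m ctr S].
Proof.
move=> hG pG.
have Gn : G \is normalmx.
  have e : map_mx Num.conj G^T = G := hG.
  by rewrite qualifE e.
have Geq := orthomx_spectralP Gn.
set P := spectralmx G in Geq; set d := spectral_diag G in Geq.
have Pu : P \is unitarymx by exact: spectral_unitarymx.
have PQ : P *m ctr P = 1%:M by exact: (unitarymxP Pu).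
have QP : ctr P *m P = 1%:M by exact: mulmx1C.
have iP : invmx P = ctr P by exact: invmx_unitary.
rewrite iP in Geq.
have dpos : forall i, 0 < d 0 i.
  move=> i.
  have -> : d 0 i = (P *m G *m ctr P) i i.
    by rewrite Geq !mulmxA PQ mul1mx -!mulmxA PQ mulmx1 mxE eqxx mulr1n.
  rewrite -rowcol_entry.
  have -> : col i (ctr P) = ctr (row i P).
    by apply/matrixP=> a b; rewrite !mxE.
  rewrite row_mul; have h0 := pG (row i P); apply: h0; apply/eqP => h.
  have : row i P *m ctr P = 0 by rewrite h mul0mx.
  rewrite rowE -mulmxA PQ mulmx1 => /matrixP /(_ 0 i); rewrite !mxE !eqxx /=.
  by move/eqP; rewrite oner_eq0.
pose s := \row_i sqrtC (d 0 i).
have s0 : forall i, s 0 i != 0.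
  by move=> i; rewrite mxE sqrtC_eq0 gt_eqF.
have sge : forall i, 0 <= s 0 i by move=> i; rewrite mxE sqrtC_ge0 ltW.
pose si := \row_i (s 0 i)^-1.
exists (ctr P *m diag_mx s), (diag_mx si *m P); split.
- rewrite -mulmxA (mulmxA (diag_mx s)) mulmx_diag.
  have -> : \row_j (s 0 j * si 0 j) = const_mx 1.
    by apply/matrixP=> a b; rewrite !mxE mulfV // sqrtC_eq0 gt_eqF.
  by rewrite diag_const_mx mul1mx QP.
- rewrite -mulmxA (mulmxA P) PQ mul1mx mulmx_diag.
  have -> : \row_j (si 0 j * s 0 j) = const_mx 1.
    by apply/matrixP=> a b; rewrite !mxE mulVf // sqrtC_eq0 gt_eqF.
  by rewrite diag_const_mx.
- rewrite ctrM ctrK -mulmxA (mulmxA (diag_mx s)).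
  have -> : ctr (diag_mx s) = diag_mx s.
    apply/matrixP=> a b; rewrite !mxE eq_sym; case: eqP => [->|_]; rewrite ?mulr1n ?mulr0n ?conjC0 // real_conj // sqrtC_ge0; apply: ltW; apply: dpos.
  have hd : diag_mx s *m diag_mx s = diag_mx d.
    rewrite mulmx_diag; congr diag_mx; apply/matrixP=> i0 j0; rewrite !mxE (ord1 i0) -expr2 sqrtCK //.
  rewrite hd. by rewrite mulmxA.
Qed.

Definition projmx m n (W : 'M[C]_(m,n)) : 'M[C]_n :=
  ctr (schmidt (row_base W)) *m schmidt (row_base W).

Lemma projmxP m n (W : 'M[C]_(m,n)) : let P := projmx W in
  [/\ ctr P = P, forall x : 'rV_n, (x <= W)%MS -> x *m P = x,
      forall x : 'rV_n, (forall y : 'rV_n, (y <= W)%MS -> (x *m ctr y) 0 0 = 0) -> x *m P = 0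
    & 0 <= \tr P].
Proof.
pose B := schmidt (row_base W).
have Bu : B *m ctr B = 1%:M.
  exact: (unitarymxP (schmidt_unitarymx _ (rank_leq_col W))).
have eqB : (B :=: W)%MS.
  by apply: eqmx_trans (eq_row_base W); apply: eqmx_schmidt_free; exact: row_base_free.
rewrite /projmx -/B; split.
- by rewrite ctrM ctrK.
- move=> x; rewrite -eqB => /submxP [D ->].
  by rewrite mulmxA -(mulmxA D) Bu mulmx1.
- move=> x hx.
  have h0 : x *m ctr B = 0.
    apply/matrixP=> i j; rewrite (ord1 i) [RHS]mxE.
    transitivity ((x *m ctr (row j B)) 0 0); last by rewrite hx // -eqB row_sub.
    by rewrite !mxE; apply: eq_bigr => k _; rewrite !mxE.
  by rewrite mulmxA h0 mul0mx.
- by rewrite mxtrace_mulC Bu mxtrace1 ler0n.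
Qed.
End Gen2.

Section Core.
Variable C : numClosedFieldType.

Lemma final_arith (T beta gamma : C) (w n : nat) :
  0 <= T -> 0 <= beta -> 0 <= gamma -> beta <= (w ^ 2 * n)%N%:R ->
  (forall t : C, 0 <= t -> 0 <= gamma - t * (2 * T) * 2 + t ^+ 2 * beta) ->
  4%:R / ((w ^ 2 * n)%N)%:R * T ^+ 2 <= gamma.
Proof.
move=> T0 b0 g0 bN q.
have [->|Tn0] := eqVneq T 0.
  by rewrite expr0n /= mulr0.
have Tp : 0 < T by rewrite lt_def Tn0.
have [bz|bn0] := eqVneq beta 0.
  have h := q ((gamma + 1) / (2 * T)).
  have /h : 0 <= (gamma + 1) / (2 * T).
    by apply: divr_ge0; [apply: addr_ge0 | apply: mulr_ge0; [apply: ler0n| apply: ltW]].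
  rewrite bz mulr0 addr0 divfK ?mulf_neq0 ?pnatr_eq0 //.
  move=> {}h; exfalso; move: h.
  have -> : gamma - (gamma + 1) * 2 = - (gamma + 2) by ring.
  rewrite oppr_ge0 => h; have : 0 < gamma + 2 by rewrite ltr_wpDl // ltr0n.
  by move=> /lt_geF; rewrite h.
have bp : 0 < beta by rewrite lt_def bn0.
have h0 := q ((2 * T) / beta).
have /h0 : 0 <= (2 * T) / beta.
  by apply: divr_ge0; [apply: mulr_ge0; [apply: ler0n| apply: ltW] | apply: ltW].
have -> : gamma - 2 * T / beta * (2 * T) * 2 + (2 * T / beta) ^+ 2 * beta =
   gamma - (4%:R * T ^+ 2) / beta by field.
rewrite subr_ge0 ler_pdivrMr // => h.
have [Nz|Nn0] := eqVneq ((w ^ 2 * n)%N%:R : C) 0.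
  by rewrite Nz invr0 mulr0 mul0r.
have Np : 0 < ((w ^ 2 * n)%N%:R : C) by rewrite lt_def Nn0 ler0n.
rewrite mulrAC ler_pdivrMr //; apply: (le_trans h).
by rewrite ler_wpM2l.
Qed.

Lemma core n w (u : 'M[C]_n) (W P : nat -> 'M[C]_n) :
  (forall i, ctr (P i) = P i) ->
  (forall i j (x : 'rV_n), (i <= w)%N -> (j <= w)%N -> (x <= W i)%MS ->
       x *m P j = if i == j then x else 0) ->
  (forall i, 0 <= \tr (P i)) ->
  (forall x : 'rV_n, exists xs : 'I_w.+1 -> 'rV_n,
       x = \sum_i xs i /\ forall i, (xs i <= W i)%MS) ->
  (forall x : 'rV_n, (x <= W 0)%MS -> x *m u = 0) ->
  (forall i (x : 'rV_n), (x <= W i.+1)%MS -> (x *m u <= W i)%MS) ->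
  4%:R / ((w ^ 2 * n)%N)%:R * (\tr (u *m ctr u)) ^+ 2 <=
    \tr ((u *m ctr u - ctr u *m u) *m (u *m ctr u - ctr u *m u)).
Proof.
move=> Ph Pw Ptr dec u0 ug.
pose f (i : nat) : C := 2%:R * i%:R - w%:R.
pose X := \sum_(i < w.+1) f i *: P i.
have SP : forall (g : nat -> C) i (x : 'rV_n), (i <= w)%N -> (x <= W i)%MS ->
    x *m (\sum_(j < w.+1) g j *: P j) = g i *: x.
  move=> g i x iw xW; rewrite mulmx_sumr.
  rewrite (bigD1 (Ordinal (iw : (i < w.+1)%N))) //= -scalemxAr (Pw i) // eqxx big1 ?addr0 //.
  move=> j hj; rewrite -scalemxAr (Pw i) // ?ifN ?scaler0 //; last by rewrite -ltnS.
  by apply: contra hj => /eqP hij; apply/eqP/val_inj => /=.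
have X1 : forall i (x : 'rV_n), (i <= w)%N -> (x <= W i)%MS -> x *m X = f i *: x.
  by move=> i x iw xW; rewrite /X (SP f i).
have ext : forall A B : 'M[C]_n,
    (forall i (x : 'rV_n), (i <= w)%N -> (x <= W i)%MS -> x *m A = x *m B) -> A = B.
  move=> A B h; apply: mx_eq_vec => x; have [xs [-> hxs]] := dec x.
  rewrite !mulmx_suml; apply: eq_bigr => i _; apply: (h i); [by rewrite -ltnS ltn_ord | exact: hxs].
have X2 : X *m u - u *m X = 2%:R *: u.
  apply: ext => i x iw xW; rewrite mulmxBr !mulmxA (X1 i) // -scalemxAl -scalemxAr.
  case: i iw xW => [|i] iw xW.
    by rewrite (u0 x xW) mul0mx !scaler0 subr0.
  rewrite (X1 i) ?ug //; last by apply: ltnW.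
  rewrite -scalerBl; congr (_ *: _); rewrite /f mulrS; ring.
have X3 : ctr X = X.
  rewrite /X ctr_sum; apply: eq_bigr => i _; rewrite ctrZ Ph; congr (_ *: _).
  by rewrite /f rmorphB rmorphM /= !conjC_nat.
pose c (i : nat) : C := (4 * i * (w - i))%N%:R.
have Y : (w ^ 2)%N%:R *: 1%:M - X *m X = \sum_(i < w.+1) c i *: P i.
  apply: ext => i x iw xW; rewrite (SP c i) // mulmxBr mulmxA (X1 i x) // -scalemxAl (X1 i x) //.
  rewrite -scalemxAr mulmx1 scalerA -scalerBl; congr (_ *: _).
  rewrite /c /f !natrM natrB //; ring.
have trX : \tr (X *m X) <= (w ^ 2 * n)%N%:R.
  have := congr1 mxtrace Y; rewrite raddfB /= mxtraceZ mxtrace1 => h.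
  rewrite -subr_ge0 natrM h raddf_sum /=; apply: sumr_ge0 => i _.
  by rewrite mxtraceZ mulr_ge0 ?ler0n.
set K := u *m ctr u - ctr u *m u.
have KX : \tr (K *m X) = 2%:R * \tr (u *m ctr u).
  rewrite /K mulmxBl raddfB /= -mulmxA mxtrace_mulC -!mulmxA -raddfB /= -mulmxBr X2.
  by rewrite -scalemxAr mxtraceZ mxtrace_mulC.
have XK : \tr (X *m K) = 2%:R * \tr (u *m ctr u) by rewrite mxtrace_mulC.
have Kh : ctr K = K by rewrite /K ctrB !ctrM ctrK.
clearbody K X.
apply: (@final_arith (\tr (u *m ctr u)) (\tr (X *m X)) (\tr (K *m K))).
- exact: tr_pos.
- by have := tr_pos X; rewrite X3.
- by have := tr_pos K; rewrite Kh.
- exact: trX.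
move=> t t0.
have e : \tr ((K - t *: X) *m (K - t *: X)) =
   \tr (K *m K) - t * (2 * \tr (u *m ctr u)) * 2 + t ^+ 2 * \tr (X *m X).
  rewrite mulmxBl !mulmxBr -!scalemxAl -!scalemxAr !scalerA !raddfB /= !mxtraceZ KX XK.
  ring.
rewrite -e; have := tr_pos (K - t *: X).
by rewrite ctrB ctrZ Kh X3 real_conj.
Qed.
End Core.

Section Main.
Variable C : numClosedFieldType.

Lemma delta_form n (A : 'M[C]_n) i j :
  ((delta_mx 0 i : 'rV[C]_n) *m A *m ctr (delta_mx 0 j : 'rV[C]_n)) 0 0 = A i j.
Proof.
have -> : ctr (delta_mx 0 j : 'rV[C]_n) = delta_mx j 0.
  apply/matrixP=> a b; rewrite !mxE; case: (_ == _); case: (_ == _) => //=.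
  by rewrite conjC1. by rewrite conjC0. by rewrite conjC0. by rewrite conjC0.
by rewrite -rowE -colE !mxE.
Qed.

Lemma form_eq n (A B : 'M[C]_n) :
  (forall x y : 'rV_n, (x *m A *m ctr y) 0 0 = (x *m B *m ctr y) 0 0) -> A = B.
Proof.
by move=> h; apply/matrixP=> i j; rewrite -delta_form h delta_form.
Qed.

Lemma subS m n (V : 'M[C]_(m,n)) (S : 'M[C]_n) (x : 'rV_n) :
  (x <= V *m S)%MS -> exists x0 : 'rV_n, x = x0 *m S /\ (x0 <= V)%MS.
Proof.
by move=> /submxP [D ->]; exists (D *m V); rewrite mulmxA submxMl.
Qed.

Lemma conj_tr n (S Si A : 'M[C]_n) : S *m Si = 1%:M -> \tr (Si *m A *m S) = \tr A.
Proof. by move=> h; rewrite mxtrace_mulC mulmxA h mul1mx. Qed.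
End Main.

Theorem lemma3p7 (R : realType) (n w : nat) (H G : 'M[R[i]]_n)
    (Vp : int -> 'M[R[i]]_n) (U Us : 'M[R[i]]_n) :
  (1 <= w)%N ->
  is_CPHS H Vp w ->
  is_hodge_metric H Vp G ->
  in_End_minus1 Vp U ->
  is_adjoint G U Us ->
  let K := U *m Us - Us *m U in
  (4%:R / ((w ^ 2 * n)%N)%:R) * (\tr (U *m Us)) ^+ 2 <= \tr (K *m K).
Proof.
move=> hw; rewrite /is_CPHS /is_hodge_metric => -[hH Hu [a [Vout Va0 Vaw Vsum Vdir]] Horth Hpos] [hG Gpos Gorth Gsame] Um Uadj /=.
have [S [Si [SSi SiS GS]]] := factor_pd hG Gpos.
have UG : U *m G = G *m ctr Us.
  apply: form_eq => x y; have := Uadj x y; rewrite /sform !mulmxA => ->.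
  by rewrite ctrM !mulmxA.
have GU : G *m ctr U = Us *m G.
  by have := congr1 (@ctr _ _ _) UG; rewrite !ctrM hG ctrK.
pose u := Si *m U *m S.
have cu : ctr u = Si *m Us *m S.
  have cS : ctr S = Si *m G by rewrite GS mulmxA SiS mul1mx.
  have GcSi : G *m ctr Si = S.
    by rewrite GS -mulmxA -ctrM SiS ctr1 mulmx1.
  rewrite /u !ctrM cS -mulmxA (mulmxA G) GU -!mulmxA GcSi.
  by rewrite !mulmxA.
have conjM : forall A B : 'M_n, (Si *m A *m S) *m (Si *m B *m S) = Si *m (A *m B) *m S.
  by move=> A B; rewrite !mulmxA -(mulmxA (Si *m A) S Si) SSi mulmx1.
have conjB : forall A B : 'M_n, Si *m A *m S - Si *m B *m S = Si *m (A - B) *m S.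
  by move=> A B; rewrite mulmxBr mulmxBl.
have -> : \tr (U *m Us) = \tr (u *m ctr u) by rewrite cu conjM conj_tr.
have -> : \tr ((U *m Us - Us *m U) *m (U *m Us - Us *m U)) =
   \tr ((u *m ctr u - ctr u *m u) *m (u *m ctr u - ctr u *m u)).
  by rewrite cu !conjM conjB conjM conj_tr.
pose W (i : nat) := Vp (a + i%:Z) *m S.
apply: (@core _ n w u W (fun i => projmx (W i))).
- by move=> i; have [] := projmxP (W i).
- move=> i j x iw jw xW; case: eqP => [<-|ne].
    by have [_ h _ _] := projmxP (W i); exact: h.
  have [_ _ h _] := projmxP (W j); apply: h => y yW.
  have [x0 [-> x0V]] := subS xW; have [y0 [-> y0V]] := subS yW.
  rewrite ctrM !mulmxA -(mulmxA x0 S (ctr S)) -GS.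
  apply: (Gorth _ _ _ x0 y0 x0V y0V).
  by rewrite (inj_eq (@addrI _ a)) eqz_nat; apply/eqP.
- by move=> i; have [] := projmxP (W i).
- move=> x.
  have : (x *m Si <= \sum_(i < w.+1) Vp (a + i%:Z)%R)%MS by rewrite Vsum submx1.
  move/sub_sumsmxP => [D hD].
  exists (fun i => D i *m Vp (a + i%:Z) *m S); split.
    by rewrite -mulmx_suml -hD -mulmxA SiS mulmx1.
  by move=> i; apply: submxMr; apply: submxMl.
- move=> x /subS [x0 [-> x0V]].
  rewrite /u !mulmxA -(mulmxA x0 S Si) SSi mulmx1.
  have hz : Vp a *m U = 0.
    apply/eqP; rewrite -submx0 -(Vout (a - 1)); first exact: Um.
    by left; rewrite ltrBlDr ltrDl.
  have : (x0 *m U <= Vp a *m U)%MS by apply: submxMr; move: x0V; rewrite addr0.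
  by rewrite hz submx0 => /eqP ->; rewrite mul0mx.
- move=> i x /subS [x0 [-> x0V]].
  rewrite /u !mulmxA -(mulmxA x0 S Si) SSi mulmx1.
  apply: submxMr; apply: submx_trans (submxMr U x0V) _.
  have := Um (a + i.+1%:Z).
  by rewrite (_ : a + i.+1%:Z - 1 = a + i%:Z) // -addn1 PoszD addrA addrK.
Qed.
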